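(* Consider the stationary M/M/1/K queue (queue length at time $0$ distributed according to the stationary distribution) with arrival rate $\lambda>0$, service rate $\mu>0$, $\rho=\lambda/\mu$ and capacity $K\ge1$, and let $D(t)$ be the number of departures in $[0,t]$. Then $\mathrm{Var}(D(t))=\bar v\,t+\bar b_e+o(1)$ as $t\to\infty$, where $$\bar v=\begin{cases}\lambda\,\dfrac{(1+\rho^{K+1})\big(1-(1+2K)\rho^K(1-\rho)-\rho^{2K+1}\big)}{(1-\rho^{K+1})^3}, & \rho\ne1,\\[1em] \lambda\Big(\dfrac23-\dfrac{3K+2}{3(K+1)^2}\Big), & \rho=1,\end{cases}$$ and $$\bar b_e=\begin{cases}\rho^{K+1}\dfrac{N_K(\rho)}{(1-\rho)^2(1-\rho^{K+1})^4}, & \rho\ne1,\\[1em] \dfrac{7K^4+28K^3+37K^2+18K}{180(K+1)^2}, & \rho=1,\end{cases}$$ with $$N_K(\rho)=\big[6(1+\rho^2)(1+K)^2-4\rho(1+6K+3K^2)\big]\rho^{K+1}+\rho^2(2+3K+K^2)(1+\rho^{2K})-2\rho(3+2K+K^2)(1+\rho^{2(K+1)})+K(1+K)(1+\rho^{2(K+2)}).$$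
   Context: The M/M/1/K queue: a single server, Poisson arrivals at rate $\lambda$, exponential service times with rate $\mu$, and at most $K$ customers in the system (arrivals finding $K$ customers are lost). The queue length $Q(t)$ is the birth–death chain on $\{0,\dots,K\}$ with up-rate $\lambda$ and down-rate $\mu$; its stationary distribution is $\pi_i=\frac{1-\rho}{1-\rho^{K+1}}\rho^i$ for $\rho\ne1$ and $\pi_i=\frac1{K+1}$ for $\rho=1$. $D(t)$ counts the service completions (downward jumps of $Q$) in $[0,t]$. *)

(* Defs.v *)
From Stdlib Require Import Reals Lra Lia ClassicalEpsilon Factorial.
Open Scope R_scope.

(* Value of an infinite real series (chosen limit of the partial sums;
   meaningful when the series converges, which is the case below). *)
Definition series (a : nat -> R) : R :=
  epsilon (inhabits 0) (fun l => Un_cv (fun N => sum_f_R0 a N) l).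

Definition pi_stat (lam mu : R) (K i : nat) : R :=
  let rho := lam / mu in
  if Nat.leb i K then
    (if Req_dec_T rho 1 then / INR (K + 1)
     else (1 - rho) / (1 - rho ^ (K + 1)) * rho ^ i)
  else 0.

(* Construction of the process by uniformization at rate lam+mu:
   ulaw lam mu K m j n = P(after m Poisson(lam+mu) clock events, Q = j and
   the number of departures so far is n), started from Q(0) ~ pi_stat.
   At each event: with prob lam/(lam+mu) an arrival (lost if Q = K);
   with prob mu/(lam+mu) a potential service (a departure iff Q > 0). *)
Fixpoint ulaw (lam mu : R) (K : nat) (m : nat) (j n : nat) {struct m} : R :=
  match m with
  | O => if Nat.eqb n 0 then pi_stat lam mu K j else 0
  | S m' =>
    if Nat.leb j K then
      lam / (lam + mu) *
        ((match j with O => 0 | S j' => ulaw lam mu K m' j' n end)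
         + (if Nat.eqb j K then ulaw lam mu K m' K n else 0))
      + mu / (lam + mu) *
        ((match n with
          | O => 0
          | S n' => if Nat.leb (S j) K then ulaw lam mu K m' (S j) n' else 0
          end)
         + (if Nat.eqb j 0 then ulaw lam mu K m' 0 n else 0))
    else 0
  end.

Definition umoment (lam mu : R) (K m k : nat) : R :=
  sum_f_R0 (fun j => sum_f_R0 (fun n => INR n ^ k * ulaw lam mu K m j n) m) K.

Definition poisson_w (lam mu t : R) (m : nat) : R :=
  exp (- ((lam + mu) * t)) * ((lam + mu) * t) ^ m / INR (fact m).

Definition ED_moment (lam mu : R) (K : nat) (t : R) (k : nat) : R :=
  series (fun m => poisson_w lam mu t m * umoment lam mu K m k).

Definition VarD (lam mu : R) (K : nat) (t : R) : R :=
  ED_moment lam mu K t 2 - (ED_moment lam mu K t 1) ^ 2.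

Definition vbar (lam mu : R) (K : nat) : R :=
  let rho := lam / mu in
  let k := INR K in
  if Req_dec_T rho 1 then
    lam * (2 / 3 - (3 * k + 2) / (3 * (k + 1) ^ 2))
  else
    lam * ((1 + rho ^ (K + 1)) *
           (1 - (1 + 2 * k) * rho ^ K * (1 - rho) - rho ^ (2 * K + 1)))
        / (1 - rho ^ (K + 1)) ^ 3.

Definition N_K (K : nat) (rho : R) : R :=
  let k := INR K in
  (6 * (1 + rho ^ 2) * (1 + k) ^ 2 - 4 * rho * (1 + 6 * k + 3 * k ^ 2)) * rho ^ (K + 1)
  + rho ^ 2 * (2 + 3 * k + k ^ 2) * (1 + rho ^ (2 * K))
  - 2 * rho * (3 + 2 * k + k ^ 2) * (1 + rho ^ (2 * (K + 1)))
  + k * (1 + k) * (1 + rho ^ (2 * (K + 2))).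

Definition bbar_e (lam mu : R) (K : nat) : R :=
  let rho := lam / mu in
  let k := INR K in
  if Req_dec_T rho 1 then
    (7 * k ^ 4 + 28 * k ^ 3 + 37 * k ^ 2 + 18 * k) / (180 * (k + 1) ^ 2)
  else
    rho ^ (K + 1) * N_K K rho / ((1 - rho) ^ 2 * (1 - rho ^ (K + 1)) ^ 4).

(* Main.v *)
Require Import Defs.
From Stdlib Require Import Reals Lra Lia FunctionalExtensionality ClassicalEpsilon Factorial.
Open Scope R_scope.

Lemma sum_shift (g : nat -> R) n :
  sum_f_R0 g (S n) = g 0%nat + sum_f_R0 (fun i => g (S i)) n.
Proof. rewrite decomp_sum; [reflexivity|lia]. Qed.

Lemma sum_zero (g : nat -> R) n : (forall i, (i <= n)%nat -> g i = 0) -> sum_f_R0 g n = 0.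
Proof.
  intro H. rewrite (sum_eq g (fun _ => 0)) by auto. rewrite sum_cte. ring.
Qed.

Lemma sum_only_last (g : nat -> R) n :
  (forall j, (j <= n)%nat -> g j = 0) -> sum_f_R0 g (S n) = g (S n).
Proof. intro H. simpl. rewrite sum_zero by auto. ring. Qed.

Lemma sum_only_first (g : nat -> R) n :
  (forall i, (i <= n)%nat -> g (S i) = 0) -> sum_f_R0 g (S n) = g 0%nat.
Proof. intro H. rewrite sum_shift. rewrite (sum_zero (fun i => g (S i))) by auto. ring. Qed.

Lemma sum_last0 (g : nat -> R) n : g (S n) = 0 -> sum_f_R0 g (S n) = sum_f_R0 g n.
Proof. intro H. simpl. rewrite H. ring. Qed.

Lemma sum_S (g : nat -> R) n : sum_f_R0 g (S n) = sum_f_R0 g n + g (S n).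
Proof. reflexivity. Qed.

Lemma sum_scal (g : nat -> R) n x : sum_f_R0 (fun i => x * g i) n = x * sum_f_R0 g n.
Proof. rewrite scal_sum. apply sum_eq. intros; ring. Qed.

Section Chain.
Variables (p q : R) (K : nat).
Hypothesis Hp : 0 <= p.
Hypothesis Hq : 0 <= q.
Hypothesis pq1 : p + q = 1.
Hypothesis HK : (1 <= K)%nat.

Definition Fw (v : nat -> R) (j : nat) : R :=
  if Nat.leb j K then
    p * ((match j with O => 0 | S j' => v j' end) + (if Nat.eqb j K then v K else 0))
    + q * ((if Nat.leb (S j) K then v (S j) else 0) + (if Nat.eqb j 0 then v 0%nat else 0))
  else 0.

Definition Tc (f : nat -> R) (j : nat) : R :=
  p * f (if Nat.leb (S j) K then S j else K) + q * f (Nat.pred j).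

Lemma duality (v f : nat -> R) :
  sum_f_R0 (fun j => Fw v j * f j) K = sum_f_R0 (fun j => v j * Tc f j) K.
Proof.
  unfold Fw, Tc. destruct K as [|K']; [lia|]. clear HK.
  match goal with |- sum_f_R0 ?g _ = _ => rewrite (sum_eq g (fun j =>
     p * ((match j with O => 0 | S j' => v j' * f j end))
   + p * (if Nat.eqb j (S K') then v (S K') * f (S K') else 0)
   + q * (if Nat.leb (S j) (S K') then v (S j) * f j else 0)
   + q * (if Nat.eqb j 0 then v 0%nat * f 0%nat else 0))) end.
  2:{ intros j Hj. replace (Nat.leb j (S K')) with true by (symmetry; apply Nat.leb_le; lia).
      destruct (Nat.eqb_spec j (S K')) as [->|Hne].
      - replace (Nat.leb (S (S K')) (S K')) with false by (symmetry; apply Nat.leb_gt; lia).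
        simpl. ring.
      - destruct j; destruct (Nat.leb _ _); simpl; ring. }
  rewrite !plus_sum, !sum_scal.
  rewrite (sum_eq (fun j => v j * (p * f (if Nat.leb (S j) (S K') then S j else S K') + q * f (Nat.pred j)))
     (fun j => p * (v j * f (if Nat.leb (S j) (S K') then S j else S K')) + q * (v j * f (Nat.pred j))))
     by (intros; ring).
  rewrite plus_sum, !sum_scal.
  rewrite (sum_shift (fun j => match j with 0%nat => 0 | S j' => v j' * f j end)).
  rewrite (sum_only_last (fun j => if Nat.eqb j (S K') then _ else 0)).
  2:{ intros j Hj. destruct (Nat.eqb_spec j (S K')); [lia|reflexivity]. }
  rewrite (sum_last0 (fun j => if Nat.leb (S j) (S K') then _ else 0)).
  2:{ destruct (Nat.leb_spec (S (S K')) (S K')); [lia|reflexivity]. }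
  rewrite (sum_only_first (fun j => if Nat.eqb j 0 then _ else 0)).
  2:{ intros; reflexivity. }
  rewrite (sum_shift (fun j => v j * f (Nat.pred j))).
  simpl (Nat.pred _).
  replace (sum_f_R0 (fun j => v j * f (if Nat.leb (S j) (S K') then S j else S K')) (S K'))
    with (sum_f_R0 (fun j => v j * f (S j)) K' + v (S K') * f (S K')).
  2:{ rewrite sum_S. cbv beta. f_equal.
      - apply sum_eq. intros i Hi. rewrite (proj2 (Nat.leb_le _ _)) by lia. reflexivity.
      - rewrite (proj2 (Nat.leb_gt _ _)) by lia. reflexivity. }
  rewrite (sum_eq (fun j => if Nat.leb (S j) (S K') then v (S j) * f j else 0)
                  (fun j => v (S j) * f j)).
  2:{ intros i Hi. replace (Nat.leb (S i) (S K')) with true by (symmetry; apply Nat.leb_le; lia).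
      reflexivity. }
  rewrite Nat.eqb_refl. simpl. ring.
Qed.

Lemma Fw_sum (v : nat -> R) : sum_f_R0 (Fw v) K = sum_f_R0 v K.
Proof.
  pose proof (duality v (fun _ => 1)) as H.
  rewrite (sum_eq (fun j => Fw v j * 1) (Fw v)) in H by (intros; ring).
  rewrite H. apply sum_eq. intros. unfold Tc. rewrite <- Rmult_plus_distr_r, pq1. ring.
Qed.

Definition Fwn (m : nat) (v : nat -> R) := Nat.iter m Fw v.
Definition Tn (m : nat) (f : nat -> R) := Nat.iter m Tc f.

Lemma duality_n m (v f : nat -> R) :
  sum_f_R0 (fun j => Fwn m v j * f j) K = sum_f_R0 (fun j => v j * Tn m f j) K.
Proof.
  revert f. induction m as [|m IH]; intro f; [reflexivity|].
  change (Fwn (S m) v) with (Fw (Fwn m v)).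
  rewrite duality, IH. unfold Tn. rewrite Nat.iter_swap. reflexivity.
Qed.

Lemma Fw_lin (a b : R) (u w : nat -> R) j :
  Fw (fun i => a * u i + b * w i) j = a * Fw u j + b * Fw w j.
Proof.
  unfold Fw. destruct (Nat.leb j K); [|ring].
  destruct j; destruct (Nat.eqb _ K); destruct (Nat.leb _ K); simpl; ring.
Qed.

Lemma Fwn_lin m (a b : R) (u w : nat -> R) :
  Fwn m (fun i => a * u i + b * w i) = (fun j => a * Fwn m u j + b * Fwn m w j).
Proof.
  induction m as [|m IH]; [reflexivity|].
  change (Fwn (S m) ?x) with (Fw (Fwn m x)). rewrite IH.
  apply functional_extensionality. intro j. apply Fw_lin.
Qed.

Lemma Fw_gtK v j : (K < j)%nat -> Fw v j = 0.
Proof. intro H. unfold Fw. replace (Nat.leb j K) with false by (symmetry; apply Nat.leb_gt; lia). reflexivity. Qed.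


Definition bnd (f : nat -> R) (lo hi : R) := forall j, (j <= K)%nat -> lo <= f j <= hi.

Lemma Tc_bnd f lo hi : bnd f lo hi -> bnd (Tc f) lo hi.
Proof.
  intros H j Hj. unfold Tc.
  assert (H1 : lo <= f (if Nat.leb (S j) K then S j else K) <= hi).
  { apply H. destruct (Nat.leb_spec (S j) K); lia. }
  assert (H2 : lo <= f (Nat.pred j) <= hi) by (apply H; lia).
  destruct H1, H2.
  assert (p * lo <= p * f (if Nat.leb (S j) K then S j else K)) by (apply Rmult_le_compat_l; lra).
  assert (p * f (if Nat.leb (S j) K then S j else K) <= p * hi) by (apply Rmult_le_compat_l; lra).
  assert (q * lo <= q * f (Nat.pred j)) by (apply Rmult_le_compat_l; lra).
  assert (q * f (Nat.pred j) <= q * hi) by (apply Rmult_le_compat_l; lra).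
  split; nra.
Qed.

Lemma Tn_bnd n f lo hi : bnd f lo hi -> bnd (Tn n f) lo hi.
Proof.
  intro H. induction n as [|n IH]; [exact H|].
  change (Tn (S n) f) with (Tc (Tn n f)). apply Tc_bnd, IH.
Qed.

Lemma doeb n f lo hi : bnd f lo hi -> forall i, (i <= n)%nat -> (n <= K)%nat ->
  q ^ n * f 0%nat + (1 - q ^ n) * lo <= Tn n f i <= q ^ n * f 0%nat + (1 - q ^ n) * hi.
Proof.
  intros Hb. induction n as [|n IH]; intros i Hi HnK.
  - assert (i = 0%nat) by lia. subst. simpl. lra.
  - change (Tn (S n) f i) with (Tc (Tn n f) i). unfold Tc.
    set (u := if Nat.leb (S i) K then S i else K).
    assert (Hu : lo <= Tn n f u <= hi).
    { apply Tn_bnd; auto. unfold u. destruct (Nat.leb_spec (S i) K); lia. }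
    assert (Hd := IH (Nat.pred i) ltac:(lia) ltac:(lia)).
    destruct Hu, Hd.
    assert (p * lo <= p * Tn n f u) by (apply Rmult_le_compat_l; lra).
    assert (p * Tn n f u <= p * hi) by (apply Rmult_le_compat_l; lra).
    assert (q * (q ^ n * f 0%nat + (1 - q ^ n) * lo) <= q * Tn n f (Nat.pred i)) by (apply Rmult_le_compat_l; lra).
    assert (q * Tn n f (Nat.pred i) <= q * (q ^ n * f 0%nat + (1 - q ^ n) * hi)) by (apply Rmult_le_compat_l; lra).
    simpl pow. split; nra.
Qed.

Lemma contract f lo hi : bnd f lo hi ->
  bnd (Tn K f) (q ^ K * f 0%nat + (1 - q ^ K) * lo) (q ^ K * f 0%nat + (1 - q ^ K) * hi).
Proof. intros Hb j Hj. apply doeb; auto. Qed.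

Lemma contract_iter s f lo hi : bnd f lo hi ->
  exists lo' hi', bnd (Tn (s * K) f) lo' hi' /\ hi' - lo' = (1 - q ^ K) ^ s * (hi - lo).
Proof.
  intro Hb. induction s as [|s IH].
  - exists lo, hi. split; [exact Hb|]. simpl. ring.
  - destruct IH as (lo' & hi' & Hb' & Hw).
    exists (q ^ K * Tn (s * K) f 0%nat + (1 - q ^ K) * lo'),
           (q ^ K * Tn (s * K) f 0%nat + (1 - q ^ K) * hi').
    split.
    + replace (S s * K)%nat with (K + s * K)%nat by lia.
      unfold Tn. rewrite Nat.iter_add. apply contract. exact Hb'.
    + transitivity ((1 - q ^ K) * (hi' - lo')); [ring|]. rewrite Hw. simpl pow. ring.
Qed.

Hypothesis Hqpos : 0 < q.

Lemma e_conv (chi : nat -> R) : sum_f_R0 chi K = 0 ->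
  forall eps, 0 < eps -> exists N, forall m, (N <= m)%nat -> Rabs (Fwn m chi 0%nat) <= eps.
Proof.
  intros Hs eps Heps.
  set (d0 := fun j : nat => if Nat.eqb j 0 then 1 else 0).
  assert (Hrep : forall m, Fwn m chi 0%nat = sum_f_R0 (fun j => chi j * Tn m d0 j) K).
  { intro m. rewrite <- duality_n. destruct K as [|K']; [lia|].
    rewrite sum_only_first.
    - unfold d0. simpl. ring.
    - intros i Hi. unfold d0. simpl. ring. }
  set (A := sum_f_R0 (fun j => Rabs (chi j)) K).
  assert (HA : 0 <= A) by (apply cond_pos_sum; intro; apply Rabs_pos).
  assert (Hb0 : bnd d0 0 1). { intros j _. unfold d0. destruct (Nat.eqb j 0); lra. }
  assert (Hth : Rabs (1 - q ^ K) < 1).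
  { assert (0 < q ^ K) by (apply pow_lt; lra).
    assert (q ^ K <= 1 ^ K) by (apply pow_incr; lra). rewrite pow1 in *.
    rewrite Rabs_right by lra. lra. }
  destruct (pow_lt_1_zero _ Hth (eps / (A + 1))) as [s Hs'].
  { apply Rdiv_lt_0_compat; lra. }
  destruct (contract_iter s d0 0 1 Hb0) as (lo & hi & Hb & Hw).
  exists (s * K)%nat. intros m Hm.
  assert (Hbm : bnd (Tn m d0) lo hi).
  { replace m with ((m - s * K) + s * K)%nat by lia. unfold Tn. rewrite Nat.iter_add.
    apply Tn_bnd. exact Hb. }
  rewrite Hrep.
  replace (sum_f_R0 (fun j => chi j * Tn m d0 j) K)
    with (sum_f_R0 (fun j => chi j * (Tn m d0 j - lo)) K).
  2:{ rewrite (sum_eq _ (fun j => chi j * Tn m d0 j - lo * chi j)) by (intros; ring).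
      rewrite minus_sum, sum_scal, Hs. ring. }
  eapply Rle_trans; [apply sum_f_R0_triangle|].
  apply Rle_trans with (sum_f_R0 (fun j => Rabs (chi j) * (hi - lo)) K).
  { apply sum_Rle. intros j Hj. rewrite Rabs_mult. apply Rmult_le_compat_l; [apply Rabs_pos|].
    destruct (Hbm j Hj). rewrite Rabs_right by lra. lra. }
  rewrite <- scal_sum. fold A.
  specialize (Hs' s (Nat.le_refl _)). rewrite Hw.
  assert (0 <= (1 - q ^ K) ^ s).
  { apply pow_le. assert (q ^ K <= 1 ^ K) by (apply pow_incr; lra). rewrite pow1 in *. lra. }
  rewrite Rabs_right in Hs' by lra.
  assert ((1 - q ^ K) ^ s * (1 - 0) * A <= eps / (A + 1) * A) by (apply Rmult_le_compat_r; lra).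
  rewrite Rmult_comm.
  assert (eps / (A + 1) * A <= eps).
  { unfold Rdiv. rewrite Rmult_assoc. rewrite <- (Rmult_1_r eps) at 2. apply Rmult_le_compat_l; [lra|].
    apply Rmult_le_reg_l with (A + 1); [lra|]. rewrite <- Rmult_assoc, Rinv_r by lra. lra. }
  lra.
Qed.

Lemma e_bound (chi : nat -> R) m :
  Rabs (Fwn m chi 0%nat) <= sum_f_R0 (fun j => Rabs (chi j)) K.
Proof.
  set (d0 := fun j : nat => if Nat.eqb j 0 then 1 else 0).
  assert (Hrep : Fwn m chi 0%nat = sum_f_R0 (fun j => chi j * Tn m d0 j) K).
  { rewrite <- duality_n. destruct K as [|K']; [lia|].
    rewrite sum_only_first.
    - unfold d0. simpl. ring.
    - intros i Hi. unfold d0. simpl. ring. }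
  assert (Hb0 : bnd d0 0 1). { intros j _. unfold d0. destruct (Nat.eqb j 0); lra. }
  pose proof (Tn_bnd m d0 0 1 Hb0) as Hb.
  rewrite Hrep. eapply Rle_trans; [apply sum_f_R0_triangle|].
  apply sum_Rle. intros j Hj. rewrite Rabs_mult.
  rewrite <- (Rmult_1_r (Rabs (chi j))) at 2. apply Rmult_le_compat_l; [apply Rabs_pos|].
  destruct (Hb j Hj). rewrite Rabs_right by lra. lra.
Qed.

End Chain.

Section Moments.
Variables (p q : R) (K : nat).
Hypothesis pq1 : p + q = 1.
Hypothesis HK : (1 <= K)%nat.
Variable pi : nat -> R.
Hypothesis pi_stat : forall j, Fw p q K pi j = pi j.
Hypothesis pi_sum : sum_f_R0 pi K = 1.
Definition cc := q * (1 - pi 0%nat).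
Definition aa (j : nat) := if Nat.leb (S j) K then q * pi (S j) else 0.
Variables psi chi : nat -> R.
Hypothesis psi_eq : forall j, psi j - Fw p q K psi j = aa j - cc * pi j.
Hypothesis psi_sum : sum_f_R0 psi K = 0.
Hypothesis chi_eq : forall j, chi j - Fw p q K chi j = psi j.
Hypothesis chi_sum : sum_f_R0 chi K = 0.
Variables V1 V2 : nat -> nat -> R.
Hypothesis V1_0 : forall j, V1 0%nat j = 0.
Hypothesis V1_S : forall m j, V1 (S m) j = Fw p q K (V1 m) j + aa j.
Hypothesis V2_0 : forall j, V2 0%nat j = 0.
Hypothesis V2_S : forall m j, V2 (S m) j =
  Fw p q K (V2 m) j + (if Nat.leb (S j) K then q * (2 * V1 m (S j) + pi (S j)) else 0).

Lemma Fwn_sum m v : sum_f_R0 (Fwn p q K m v) K = sum_f_R0 v K.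
Proof.
  induction m as [|m IH]; [reflexivity|].
  change (Fwn p q K (S m) v) with (Fw p q K (Fwn p q K m v)). rewrite Fw_sum; auto.
Qed.

Lemma dotb v : sum_f_R0 (fun j => if Nat.leb (S j) K then q * v (S j) else 0) K
  = q * (sum_f_R0 v K - v 0%nat).
Proof.
  destruct K as [|K']; [lia|].
  rewrite sum_last0.
  2:{ rewrite (proj2 (Nat.leb_gt _ _)) by lia. reflexivity. }
  rewrite (sum_shift v). rewrite (sum_eq _ (fun j => q * v (S j))).
  2:{ intros i Hi. rewrite (proj2 (Nat.leb_le _ _)) by lia. reflexivity. }
  rewrite sum_scal. ring.
Qed.

Lemma V1_formula m j : V1 m j = INR m * cc * pi j + psi j - Fwn p q K m psi j.
Proof.
  revert j. induction m as [|m IH]; intro j.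
  - rewrite V1_0. simpl. ring.
  - rewrite V1_S.
    assert (E : V1 m = fun i => (INR m * cc) * pi i + 1 * (psi i - Fwn p q K m psi i)).
    { apply functional_extensionality. intro i. rewrite IH. ring. }
    rewrite E, Fw_lin.
    assert (E2 : (fun i => psi i - Fwn p q K m psi i) = fun i => 1 * psi i + (-1) * Fwn p q K m psi i).
    { apply functional_extensionality. intro; ring. }
    rewrite E2, Fw_lin, pi_stat.
    change (Fw p q K (Fwn p q K m psi) j) with (Fwn p q K (S m) psi j).
    specialize (psi_eq j). rewrite S_INR. lra.
Qed.

Lemma S1_formula m : sum_f_R0 (V1 m) K = INR m * cc.
Proof.
  rewrite (sum_eq _ (fun j => (INR m * cc) * pi j + (psi j - Fwn p q K m psi j)))
    by (intros; rewrite V1_formula; ring).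
  rewrite plus_sum, minus_sum, sum_scal, Fwn_sum, pi_sum, psi_sum. ring.
Qed.

Lemma Fwn_psi m j : Fwn p q K m psi j = Fwn p q K m chi j - Fwn p q K (S m) chi j.
Proof.
  assert (E : psi = fun i => 1 * chi i + (-1) * Fw p q K chi i).
  { apply functional_extensionality. intro i. rewrite <- chi_eq. ring. }
  rewrite E, Fwn_lin.
  replace (Fwn p q K m (Fw p q K chi)) with (Fwn p q K (S m) chi)
    by (unfold Fwn; rewrite Nat.iter_swap; reflexivity). ring.
Qed.

Lemma S2_formula m : sum_f_R0 (V2 m) K =
  cc ^ 2 * INR m * (INR m - 1) + (cc - 2 * q * psi 0%nat) * INR m
  + 2 * q * chi 0%nat - 2 * q * Fwn p q K m chi 0%nat.
Proof.
  induction m as [|m IH].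
  - rewrite (sum_eq _ (fun _ => 0)) by (intros; apply V2_0).
    rewrite sum_cte. simpl. ring.
  - rewrite (sum_eq _ (fun j => Fw p q K (V2 m) j +
        (if Nat.leb (S j) K then q * (2 * V1 m (S j) + pi (S j)) else 0))) by (intros; apply V2_S).
    rewrite plus_sum, Fw_sum; auto. rewrite IH.
    pose proof (dotb (fun j => 2 * V1 m j + pi j)) as Hd. cbv beta in Hd. rewrite Hd.
    rewrite plus_sum, sum_scal, S1_formula, pi_sum.
    rewrite V1_formula. rewrite Fwn_psi.
    replace (Fwn p q K m psi 0%nat) with (Fwn p q K m chi 0%nat - Fwn p q K (S m) chi 0%nat)
      by (symmetry; apply Fwn_psi).
    unfold cc. rewrite S_INR. ring.
Qed.
End Moments.

Lemma Fw_stat (p q : R) (K : nat) (pi : nat -> R) :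
  p + q = 1 -> (1 <= K)%nat ->
  (forall j, (j < K)%nat -> p * pi j = q * pi (S j)) ->
  (forall j, (K < j)%nat -> pi j = 0) ->
  forall j, Fw p q K pi j = pi j.
Proof.
  intros pq1 HK Hdb Hz j. unfold Fw.
  destruct (Nat.leb_spec j K) as [HjK|HjK]; [|rewrite Hz by lia; reflexivity].
  destruct j as [|j'].
  - rewrite (proj2 (Nat.leb_le 1 K)) by lia.
    destruct (Nat.eqb_spec 0 K); [lia|]. simpl.
    specialize (Hdb 0%nat ltac:(lia)).
    transitivity ((p + q) * pi 0%nat); [lra | rewrite pq1; ring].
  - destruct (Nat.eqb_spec (S j') K) as [E|E].
    + rewrite (proj2 (Nat.leb_gt (S (S j')) K)) by lia. simpl.
      specialize (Hdb j' ltac:(lia)). rewrite E in *.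
      transitivity ((p + q) * pi K); [lra | rewrite pq1; ring].
    + rewrite (proj2 (Nat.leb_le (S (S j')) K)) by lia. simpl.
      pose proof (Hdb j' ltac:(lia)). pose proof (Hdb (S j') ltac:(lia)).
      transitivity ((p + q) * pi (S j')); [lra | rewrite pq1; ring].
Qed.

Lemma Fw_0 (p q : R) (K : nat) v : (1 <= K)%nat -> Fw p q K v 0%nat = q * (v 1%nat + v 0%nat).
Proof.
  intro HK. unfold Fw. rewrite (proj2 (Nat.leb_le 0 K)) by lia.
  rewrite (proj2 (Nat.leb_le 1 K)) by lia. destruct (Nat.eqb_spec 0 K); [lia|]. simpl. ring.
Qed.

Lemma Fw_int (p q : R) (K : nat) v j : (S j < K)%nat ->
  Fw p q K v (S j) = p * v j + q * v (S (S j)).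
Proof.
  intro H. unfold Fw. rewrite (proj2 (Nat.leb_le (S j) K)) by lia.
  rewrite (proj2 (Nat.leb_le (S (S j)) K)) by lia. destruct (Nat.eqb_spec (S j) K); [lia|].
  simpl. ring.
Qed.

Lemma row_reduce (p q : R) (K : nat) (v rhs : nat -> R) :
  p + q = 1 -> (1 <= K)%nat ->
  (forall j, (K < j)%nat -> v j = 0) -> (forall j, (K < j)%nat -> rhs j = 0) ->
  v 0%nat - Fw p q K v 0%nat = rhs 0%nat ->
  (forall j, (S j < K)%nat -> v (S j) - Fw p q K v (S j) = rhs (S j)) ->
  sum_f_R0 rhs K = 0 ->
  forall j, v j - Fw p q K v j = rhs j.
Proof.
  intros pq1 HK Hv Hr H0 HI Hs j.
  assert (Hlt : forall j, (j < K)%nat -> v j - Fw p q K v j = rhs j).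
  { intros [|j'] Hj; [exact H0|apply HI; exact Hj]. }
  destruct (Nat.lt_total j K) as [Hj|[Hj|Hj]].
  - apply Hlt; exact Hj.
  - subst j.
    assert (Hsum : sum_f_R0 (fun i => v i - Fw p q K v i) K = 0).
    { rewrite minus_sum, Fw_sum; auto. ring. }
    destruct K as [|K']; [lia|].
    rewrite sum_S in Hsum, Hs.
    rewrite (sum_eq (fun i => v i - Fw p q (S K') v i) rhs) in Hsum.
    + lra.
    + intros i Hi. apply Hlt. lia.
  - rewrite Hv, Hr, Fw_gtK by auto. ring.
Qed.

Section U.
Variables (lam mu : R) (K : nat).
Hypothesis Hlam : 0 < lam.
Hypothesis Hmu : 0 < mu.
Hypothesis HK : (1 <= K)%nat.

Definition pp := lam / (lam + mu).
Definition qq := mu / (lam + mu).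

Lemma ulaw_big m j n : (m < n)%nat -> ulaw lam mu K m j n = 0.
Proof.
  revert j n. induction m as [|m IH]; intros j n Hn.
  - simpl. destruct (Nat.eqb_spec n 0); [lia|reflexivity].
  - cbn [ulaw]. destruct (Nat.leb j K); [|reflexivity].
    rewrite (IH K n) by lia. rewrite (IH 0%nat n) by lia.
    assert (A1 : match j with O => 0 | S j' => ulaw lam mu K m j' n end = 0).
    { destruct j; [reflexivity|apply IH; lia]. }
    assert (A2 : match n with O => 0 | S n' => if Nat.leb (S j) K then ulaw lam mu K m (S j) n' else 0 end = 0).
    { destruct n; [reflexivity|]. destruct (Nat.leb _ _); [apply IH; lia|reflexivity]. }
    rewrite A1, A2. destruct (Nat.eqb j K), (Nat.eqb j 0); ring.
Qed.

Definition Mk (h : nat -> R) (m j : nat) : R :=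
  sum_f_R0 (fun n => h n * ulaw lam mu K m j n) m.

Lemma Mk_ext (h : nat -> R) m i : sum_f_R0 (fun n => h n * ulaw lam mu K m i n) (S m) = Mk h m i.
Proof. unfold Mk. rewrite sum_last0; [reflexivity|]. rewrite ulaw_big by lia. ring. Qed.

Lemma Mk_S (h : nat -> R) m j :
  Mk h (S m) j = Fw pp qq K (Mk h m) j +
    (if Nat.leb (S j) K then qq * sum_f_R0 (fun n => (h (S n) - h n) * ulaw lam mu K m (S j) n) m else 0).
Proof.
  unfold Fw. destruct (Nat.leb_spec j K) as [HjK|HjK].
  2:{ rewrite (proj2 (Nat.leb_gt (S j) K)) by lia. unfold Mk.
      rewrite (sum_eq _ (fun _ => 0)); [rewrite sum_cte; ring|].
      intros n _. cbn [ulaw]. rewrite (proj2 (Nat.leb_gt j K)) by lia. ring. }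
  unfold Mk at 1.
  rewrite (sum_eq _ (fun n =>
      pp * (h n * match j with O => 0 | S j' => ulaw lam mu K m j' n end)
    + pp * (if Nat.eqb j K then h n * ulaw lam mu K m K n else 0)
    + qq * (h n * match n with O => 0 | S n' => if Nat.leb (S j) K then ulaw lam mu K m (S j) n' else 0 end)
    + qq * (if Nat.eqb j 0 then h n * ulaw lam mu K m 0 n else 0))).
  2:{ intros n _. cbn [ulaw]. rewrite (proj2 (Nat.leb_le j K)) by lia. fold pp qq.
      destruct (Nat.eqb j K), (Nat.eqb j 0); ring. }
  rewrite !plus_sum, !sum_scal.
  assert (P1 : sum_f_R0 (fun n => h n * match j with O => 0 | S j' => ulaw lam mu K m j' n end) (S m)
             = match j with O => 0 | S j' => Mk h m j' end).
  { destruct j as [|j']. - rewrite (sum_eq _ (fun _ => 0)) by (intros; ring). rewrite sum_cte; ring.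
    - apply Mk_ext. }
  assert (P2 : sum_f_R0 (fun n => if Nat.eqb j K then h n * ulaw lam mu K m K n else 0) (S m)
             = if Nat.eqb j K then Mk h m K else 0).
  { destruct (Nat.eqb j K). - apply Mk_ext. - apply sum_zero; reflexivity. }
  assert (P4 : sum_f_R0 (fun n => if Nat.eqb j 0 then h n * ulaw lam mu K m 0 n else 0) (S m)
             = if Nat.eqb j 0 then Mk h m 0 else 0).
  { destruct (Nat.eqb j 0). - apply Mk_ext. - apply sum_zero; reflexivity. }
  assert (P3 : sum_f_R0 (fun n => h n * match n with O => 0 | S n' => if Nat.leb (S j) K then ulaw lam mu K m (S j) n' else 0 end) (S m)
             = if Nat.leb (S j) K then sum_f_R0 (fun n => h (S n) * ulaw lam mu K m (S j) n) m else 0).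
  { rewrite sum_shift. destruct (Nat.leb (S j) K).
    - ring.
    - rewrite sum_zero by (intros; ring). ring. }
  rewrite P1, P2, P3, P4.
  destruct (Nat.leb (S j) K).
  - replace (Mk h m (S j)) with (sum_f_R0 (fun n => h n * ulaw lam mu K m (S j) n) m) by reflexivity.
    rewrite (sum_eq (fun n => (h (S n) - h n) * _) (fun n => h (S n) * ulaw lam mu K m (S j) n - h n * ulaw lam mu K m (S j) n)) by (intros; ring).
    rewrite minus_sum. ring.
  - ring.
Qed.


Lemma pq_sum : pp + qq = 1.
Proof. unfold pp, qq. field. lra. Qed.

Lemma pi_gt j : (K < j)%nat -> pi_stat lam mu K j = 0.
Proof. intro H. unfold pi_stat. rewrite (proj2 (Nat.leb_gt j K)) by lia. reflexivity. Qed.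

Lemma pp_qq : pp = qq * (lam / mu).
Proof. unfold pp, qq. field. lra. Qed.

Lemma pi_db j : (j < K)%nat -> pp * pi_stat lam mu K j = qq * pi_stat lam mu K (S j).
Proof.
  intro H. unfold pi_stat. cbv zeta.
  rewrite (proj2 (Nat.leb_le j K)) by lia. rewrite (proj2 (Nat.leb_le (S j) K)) by lia.
  rewrite pp_qq. destruct (Req_dec_T (lam / mu) 1) as [E|E].
  - rewrite E. ring.
  - simpl pow. ring.
Qed.

Lemma pow_neq1 r n : 0 < r -> r <> 1 -> (1 <= n)%nat -> r ^ n <> 1.
Proof.
  intros Hr Hne Hn. destruct (Rlt_or_le r 1) as [H|H].
  - assert (0 <= r ^ n < 1) by (apply pow_lt_1_compat; [lra|lia]). lra.
  - assert (1 < r) by lra. assert (1 < r ^ n) by (apply Rlt_pow_R1; auto; lia). lra.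
Qed.


Lemma pi_sum : sum_f_R0 (pi_stat lam mu K) K = 1.
Proof.
  assert (Hrho : 0 < lam / mu) by (apply Rdiv_lt_0_compat; lra).
  rewrite (sum_eq _ (fun j => pi_stat lam mu K j)) by reflexivity.
  unfold pi_stat. cbv zeta.
  destruct (Req_dec_T (lam / mu) 1) as [E|E].
  - rewrite (sum_eq _ (fun _ => / INR (K + 1))).
    + rewrite sum_cte. replace (K + 1)%nat with (S K) by lia. field. apply not_0_INR; lia.
    + intros i Hi. rewrite (proj2 (Nat.leb_le i K)) by lia. reflexivity.
  - rewrite (sum_eq _ (fun j => (1 - lam / mu) / (1 - (lam / mu) ^ (K + 1)) * (lam / mu) ^ j)).
    + rewrite sum_scal, tech3 by exact E. replace (K + 1)%nat with (S K) by lia.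
      assert ((lam / mu) ^ S K <> 1) by (apply pow_neq1; auto; lia).
      field. split; [lra|split; [|lra]].
      intro Hc. apply E. replace lam with mu by lra. field. lra.
    + intros i Hi. rewrite (proj2 (Nat.leb_le i K)) by lia. reflexivity.
Qed.

Lemma pi_stationary j : Fw pp qq K (pi_stat lam mu K) j = pi_stat lam mu K j.
Proof. apply Fw_stat; auto using pq_sum, pi_db, pi_gt. Qed.

Lemma M0_formula m j : Mk (fun _ => 1) m j = pi_stat lam mu K j.
Proof.
  revert j. induction m as [|m IH]; intro j.
  - unfold Mk. simpl. ring.
  - rewrite Mk_S. rewrite (sum_eq _ (fun _ => 0)) by (intros; ring). rewrite sum_cte.
    assert (E : Mk (fun _ => 1) m = pi_stat lam mu K) by (apply functional_extensionality; exact IH).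
    rewrite E, pi_stationary. destruct (Nat.leb _ _); ring.
Qed.

Definition V1 m j := Mk (fun n => INR n ^ 1) m j.
Definition V2 m j := Mk (fun n => INR n ^ 2) m j.

Lemma V1_0 j : V1 0 j = 0.
Proof. unfold V1, Mk. simpl. ring. Qed.
Lemma V2_0 j : V2 0 j = 0.
Proof. unfold V2, Mk. simpl. ring. Qed.

Lemma V1_S m j : V1 (S m) j = Fw pp qq K (V1 m) j + aa qq K (pi_stat lam mu K) j.
Proof.
  unfold V1. rewrite Mk_S. f_equal. unfold aa.
  destruct (Nat.leb _ _); [|reflexivity]. f_equal.
  rewrite <- (M0_formula m (S j)). unfold Mk. apply sum_eq. intros. rewrite S_INR. ring.
Qed.

Lemma V2_S m j : V2 (S m) j = Fw pp qq K (V2 m) j +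
  (if Nat.leb (S j) K then qq * (2 * V1 m (S j) + pi_stat lam mu K (S j)) else 0).
Proof.
  unfold V2. rewrite Mk_S. f_equal.
  destruct (Nat.leb _ _); [|reflexivity]. f_equal.
  rewrite <- (M0_formula m (S j)). unfold V1, Mk. rewrite <- sum_scal, <- plus_sum.
  apply sum_eq. intros. rewrite S_INR. ring.
Qed.

End U.

Definition pw (x : R) (m : nat) : R := exp (- x) * x ^ m / INR (fact m).

Lemma pw_pos x m : 0 <= x -> 0 <= pw x m.
Proof.
  intro Hx. unfold pw. apply Rmult_le_pos; [apply Rmult_le_pos|].
  - left; apply exp_pos.
  - apply pow_le; lra.
  - left; apply Rinv_0_lt_compat, INR_fact_lt_0.
Qed.

Lemma series_eq (a : nat -> R) l : Un_cv (fun N => sum_f_R0 a N) l -> series a = l.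
Proof.
  intro H. unfold series.
  assert (Hs := epsilon_spec (inhabits 0) (fun l => Un_cv (fun N => sum_f_R0 a N) l) (ex_intro _ l H)).
  eapply UL_sequence; eauto.
Qed.

Lemma cv_shift (a b : nat -> R) l : (forall N, a (S N) = b N) -> Un_cv b l -> Un_cv a l.
Proof.
  intros E H eps Heps. destruct (H eps Heps) as [N0 HN].
  exists (S N0). intros n Hn. destruct n as [|n]; [lia|]. rewrite E. apply HN. lia.
Qed.

Lemma cv_const c : Un_cv (fun _ => c) c.
Proof. intros eps He. exists 0%nat. intros. unfold R_dist. rewrite Rminus_diag, Rabs_R0. exact He. Qed.

Lemma cv_ext (a b : nat -> R) l : (forall n, a n = b n) -> Un_cv a l -> Un_cv b l.
Proof. intros E H eps He. destruct (H eps He) as [N HN]. exists N. intros. rewrite <- E. auto. Qed.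

Lemma pw_sum_cv x : Un_cv (fun N => sum_f_R0 (pw x) N) 1.
Proof.
  replace 1 with (exp (- x) * exp x) by (rewrite exp_Ropp; field; apply Rgt_not_eq, exp_pos).
  apply (cv_shift _ (fun N => exp (- x) * E1 x (S N))).
  - intro N. unfold E1. rewrite <- sum_scal. apply sum_eq. intros. unfold pw. unfold Rdiv. ring.
  - apply CV_mult; [apply cv_const|].
    intros eps He. destruct (E1_cvg x eps He) as [N0 HN]. exists N0. intros. apply HN. lia.
Qed.

Lemma pw_S x m : pw x (S m) * INR (S m) = x * pw x m.
Proof.
  unfold pw. rewrite fact_simpl, mult_INR. simpl pow.
  field. split; [apply INR_fact_neq_0 | apply not_0_INR; lia].
Qed.

Lemma pw_m_cv x : Un_cv (fun N => sum_f_R0 (fun m => pw x m * INR m) N) x.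
Proof.
  apply (cv_shift _ (fun N => x * sum_f_R0 (pw x) N)).
  - intro N. rewrite sum_shift. simpl INR at 1. rewrite Rmult_0_r, Rplus_0_l.
    rewrite <- sum_scal. apply sum_eq. intros. apply pw_S.
  - assert (H := CV_mult _ _ _ _ (cv_const x) (pw_sum_cv x)). rewrite Rmult_1_r in H. exact H.
Qed.

Lemma pw_mm_cv x : Un_cv (fun N => sum_f_R0 (fun m => pw x m * (INR m * (INR m - 1))) N) (x ^ 2).
Proof.
  apply (cv_shift _ (fun N => x * sum_f_R0 (fun m => pw x m * INR m) N)).
  - intro N. rewrite sum_shift. simpl INR at 1. rewrite Rmult_0_l, Rmult_0_r, Rplus_0_l.
    rewrite <- sum_scal. apply sum_eq. intros i _.
    rewrite S_INR. replace (INR i + 1 - 1) with (INR i) by ring.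
    rewrite <- S_INR. rewrite <- Rmult_assoc, pw_S. ring.
  - assert (H := CV_mult _ _ _ _ (cv_const x) (pw_m_cv x)). replace (x ^ 2) with (x * x) by ring. exact H.
Qed.

Lemma Rabs_inv_le a b : Rabs a <= b -> - b <= a <= b.
Proof. unfold Rabs. destruct (Rcase_abs a); lra. Qed.

Lemma series_bnd (w e : nat -> R) B S :
  (forall m, 0 <= w m) -> (forall m, Rabs (e m) <= B) -> Un_cv (fun N => sum_f_R0 w N) S ->
  exists L, Un_cv (fun N => sum_f_R0 (fun m => w m * e m) N) L.
Proof.
  intros Hw He Hs.
  assert (HB : forall m, 0 <= w m * (B + e m) <= w m * (2 * B)).
  { intro m. specialize (He m). apply Rabs_inv_le in He.
    split; [apply Rmult_le_pos; auto; lra | apply Rmult_le_compat_l; auto; lra]. }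
  destruct (Rseries_CV_comp _ _ HB) as [L1 HL1].
  { exists (2 * B * S). apply (cv_ext (fun N => 2 * B * sum_f_R0 w N)).
    - intro n. rewrite <- sum_scal. apply sum_eq. intros; ring.
    - apply CV_mult; [apply cv_const|exact Hs]. }
  exists (L1 - B * S).
  apply (cv_ext (fun N => sum_f_R0 (fun m => w m * (B + e m)) N - B * sum_f_R0 w N)).
  - intro n. rewrite <- sum_scal, <- minus_sum. apply sum_eq. intros; ring.
  - apply CV_minus; [exact HL1|]. apply CV_mult; [apply cv_const|exact Hs].
Qed.

Lemma psum_mono (w : nat -> R) n M : (forall m, 0 <= w m) -> (n <= M)%nat -> sum_f_R0 w n <= sum_f_R0 w M.
Proof.
  intros Hw H. induction M as [|M IH].
  - assert (n = 0%nat) by lia. subst. lra.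
  - destruct (Nat.eq_dec n (S M)) as [->|Hne]; [lra|].
    simpl. specialize (Hw (S M)). assert (sum_f_R0 w n <= sum_f_R0 w M) by (apply IH; lia). lra.
Qed.

Lemma ind_sum_le (w : nat -> R) M N : (forall m, 0 <= w m) ->
  sum_f_R0 (fun m => if Nat.leb m M then w m else 0) N <= sum_f_R0 w M.
Proof.
  intro Hw. induction N as [|N IH].
  - simpl. change (w 0%nat <= sum_f_R0 w M). apply (psum_mono w 0 M Hw). lia.
  - destruct (Nat.leb_spec (S N) M) as [H|H].
    + rewrite (sum_eq _ w). { apply psum_mono; auto. }
      intros i Hi. rewrite (proj2 (Nat.leb_le i M)) by lia. reflexivity.
    + rewrite sum_S. replace (Nat.leb (S N) M) with false by (symmetry; apply Nat.leb_gt; lia). lra.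
Qed.

Lemma exp_mult_n (y : R) n : exp (INR n * y) = exp y ^ n.
Proof.
  induction n as [|n IH]. - simpl. rewrite Rmult_0_l, exp_0. reflexivity.
  - rewrite S_INR, Rmult_plus_distr_r, Rmult_1_l, exp_plus, IH. simpl. ring.
Qed.

Lemma exp_pow_ge x M : 0 <= x -> (x / INR (S M)) ^ (S M) <= exp x.
Proof.
  intro Hx. assert (HS : 0 < INR (S M)) by (apply lt_0_INR; lia).
  replace x with (INR (S M) * (x / INR (S M))) at 2 by (field; lra).
  rewrite exp_mult_n. apply pow_incr. split.
  - apply Rmult_le_pos; [lra|left; apply Rinv_0_lt_compat; lra].
  - pose proof (exp_ineq1_le (x / INR (S M))). lra.
Qed.

Lemma pw_head_bound x M : 1 <= x ->
  sum_f_R0 (pw x) M <= INR (S M) ^ (S (S M)) / x.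
Proof.
  intro Hx. assert (HS : 0 < INR (S M)) by (apply lt_0_INR; lia).
  apply Rle_trans with (sum_f_R0 (fun _ => exp (- x) * x ^ M) M).
  { apply sum_Rle. intros m Hm. unfold pw.
    assert (H1 : x ^ m <= x ^ M) by (apply Rle_pow; auto).
    assert (H2 : 1 <= INR (fact m)).
    { pose proof (lt_O_fact m). apply (le_INR 1); lia. }
    assert (H3 : 0 < exp (- x)) by apply exp_pos.
    assert (H4 : 0 < x ^ m) by (apply pow_lt; lra).
    unfold Rdiv. apply Rle_trans with (exp (- x) * x ^ m * 1).
    - apply Rmult_le_compat_l; [apply Rmult_le_pos; lra|].
      rewrite <- Rinv_1. apply Rinv_le_contravar; lra.
    - rewrite Rmult_1_r. apply Rmult_le_compat_l; lra. }
  rewrite sum_cte.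
  pose proof (exp_pow_ge x M ltac:(lra)) as He.
  rewrite exp_Ropp.
  assert (Hxp : 0 < x ^ S M) by (apply pow_lt; lra).
  assert (HSp : 0 < INR (S M) ^ S M) by (apply pow_lt; lra).
  unfold Rdiv in He. rewrite Rpow_mult_distr, pow_inv in He.
  assert (Hex : x ^ S M <= INR (S M) ^ S M * exp x).
  { apply Rmult_le_reg_r with (/ INR (S M) ^ S M); [apply Rinv_0_lt_compat; lra|].
    replace (INR (S M) ^ S M * exp x * / INR (S M) ^ S M) with (exp x) by (field; lra). exact He. }
  assert (Hexp : 0 < exp x) by apply exp_pos.
  apply Rmult_le_reg_r with (exp x * x); [apply Rmult_lt_0_compat; lra|].
  replace (/ exp x * x ^ M * INR (S M) * (exp x * x)) with (INR (S M) * x ^ S M) by (simpl; field; lra).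
  replace (INR (S M) ^ S (S M) / x * (exp x * x)) with (INR (S M) * (INR (S M) ^ S M * exp x)) by (simpl; field; lra).
  apply Rmult_le_compat_l; lra.
Qed.

Lemma tail_small (e : nat -> R) B :
  (forall m, Rabs (e m) <= B) ->
  (forall eps, 0 < eps -> exists N, forall m, (N <= m)%nat -> Rabs (e m) <= eps) ->
  forall eps, 0 < eps -> exists X, forall x L, X <= x ->
    Un_cv (fun N => sum_f_R0 (fun m => pw x m * e m) N) L -> Rabs L <= eps.
Proof.
  intros HB Hc eps Heps.
  assert (HB0 : 0 <= B) by (specialize (HB 0%nat); pose proof (Rabs_pos (e 0%nat)); lra).
  destruct (Hc (eps / 2) ltac:(lra)) as [M HM].
  set (C := INR (S M) ^ S (S M)).
  assert (HC : 0 < C) by (apply pow_lt, lt_0_INR; lia).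
  exists (Rmax 1 (2 * B * C / eps + 1)). intros x L Hx HL.
  assert (Hx1 : 1 <= x) by (eapply Rle_trans; [apply Rmax_l|exact Hx]).
  assert (Hx2 : 2 * B * C / eps + 1 <= x) by (eapply Rle_trans; [apply Rmax_r|exact Hx]).
  assert (Hhead : B * sum_f_R0 (pw x) M <= eps / 2).
  { apply Rle_trans with (B * (C / x)).
    - apply Rmult_le_compat_l; auto. apply pw_head_bound; auto.
    - apply Rmult_le_reg_r with (2 * x / eps); [apply Rdiv_lt_0_compat; lra|].
      replace (B * (C / x) * (2 * x / eps)) with (2 * B * C / eps) by (field; lra).
      replace (eps / 2 * (2 * x / eps)) with x by (field; lra). lra. }
  assert (Hpart : forall N, Rabs (sum_f_R0 (fun m => pw x m * e m) N) <= eps).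
  { intro N. eapply Rle_trans; [apply sum_f_R0_triangle|].
    apply Rle_trans with (sum_f_R0 (fun m => B * (if Nat.leb m M then pw x m else 0) + eps / 2 * pw x m) N).
    - apply sum_Rle. intros m _. rewrite Rabs_mult, Rabs_right by (apply Rle_ge, pw_pos; lra).
      pose proof (pw_pos x m ltac:(lra)).
      destruct (Nat.leb_spec m M) as [Hm|Hm].
      + specialize (HB m). assert (pw x m * Rabs (e m) <= pw x m * B) by (apply Rmult_le_compat_l; auto).
        nra.
      + assert (Rabs (e m) <= eps / 2) by (apply HM; lia).
        assert (pw x m * Rabs (e m) <= pw x m * (eps / 2)) by (apply Rmult_le_compat_l; auto).
        nra.
    - rewrite plus_sum, !sum_scal.
      pose proof (ind_sum_le (pw x) M N (fun m => pw_pos x m ltac:(lra))).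
      pose proof (sum_incr (pw x) N 1 (pw_sum_cv x) (fun m => pw_pos x m ltac:(lra))).
      assert (B * sum_f_R0 (fun m => if Nat.leb m M then pw x m else 0) N <= B * sum_f_R0 (pw x) M)
        by (apply Rmult_le_compat_l; auto).
      assert (eps / 2 * sum_f_R0 (pw x) N <= eps / 2 * 1) by (apply Rmult_le_compat_l; lra).
      lra. }
  apply Rabs_le. split.
  - eapply Rle_cv_lim; [ | apply cv_const | exact HL].
    intro n. destruct (Rabs_inv_le _ _ (Hpart n)). simpl. lra.
  - eapply Rle_cv_lim; [ | exact HL | apply cv_const].
    intro n. destruct (Rabs_inv_le _ _ (Hpart n)). simpl. lra.
Qed.

Lemma sum_jr (r : R) n : r <> 1 ->
  sum_f_R0 (fun j => INR j * r ^ j) n =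
  r * (1 - (INR n + 1) * r ^ n + INR n * r * r ^ n) / (1 - r) ^ 2.
Proof.
  intro Hr. assert (1 - r <> 0) by (intro; apply Hr; lra).
  induction n as [|n IH].
  - simpl. field. auto.
  - rewrite sum_S, IH, S_INR. simpl pow. field. auto.
Qed.

Lemma sum_j2r (r : R) n : r <> 1 ->
  sum_f_R0 (fun j => INR j ^ 2 * r ^ j) n =
  r * (1 + r - (INR n + 1) ^ 2 * r ^ n + (2 * INR n ^ 2 + 2 * INR n - 1) * r * r ^ n
       - INR n ^ 2 * r ^ 2 * r ^ n) / (1 - r) ^ 3.
Proof.
  intro Hr. assert (1 - r <> 0) by (intro; apply Hr; lra).
  induction n as [|n IH].
  - simpl. field. auto.
  - rewrite sum_S, IH, S_INR. simpl pow. field. auto.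
Qed.

Lemma sum_j1 n : sum_f_R0 (fun j => INR j) n = INR n * (INR n + 1) / 2.
Proof. induction n as [|n IH]; [simpl; field|]. rewrite sum_S, IH, S_INR. field. Qed.
Lemma sum_j2 n : sum_f_R0 (fun j => INR j ^ 2) n = INR n * (INR n + 1) * (2 * INR n + 1) / 6.
Proof. induction n as [|n IH]; [simpl; field|]. rewrite sum_S, IH, S_INR. field. Qed.
Lemma sum_j3 n : sum_f_R0 (fun j => INR j ^ 3) n = (INR n * (INR n + 1) / 2) ^ 2.
Proof. induction n as [|n IH]; [simpl; field|]. rewrite sum_S, IH, S_INR. field. Qed.
Lemma sum_j4 n : sum_f_R0 (fun j => INR j ^ 4) n =
  INR n * (INR n + 1) * (2 * INR n + 1) * (3 * INR n ^ 2 + 3 * INR n - 1) / 30.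
Proof. induction n as [|n IH]; [simpl; field|]. rewrite sum_S, IH, S_INR. field. Qed.

Definition NN (r X : R) := 1 - r * X.
Definition cpi0 (r X : R) := (1 - r) / NN r X.
Definition cpiK (r X : R) := (1 - r) * X / NN r X.
Definition Bp (r X : R) := r * (1 - r) * X / NN r X ^ 2.
Definition Cp (r X : R) := - r * (Bp r X + cpiK r X * cpi0 r X) / (1 - r).
Definition Sj1 (r X k : R) := r * (1 - (k + 1) * X + k * r * X) / (1 - r) ^ 2.
Definition Sj2 (r X k : R) := r * (1 + r - (k + 1) ^ 2 * X + (2 * k ^ 2 + 2 * k - 1) * r * X - k ^ 2 * r ^ 2 * X) / (1 - r) ^ 3.
Definition Ap (r X k : R) := - (1 - r) / NN r X * ((k + 1) * Cp r X + Bp r X * Sj1 r X k).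
Definition Ec (r X : R) := - Cp r X * (1 + r) / (1 - r).
Definition Hc (r X : R) := Bp r X * (1 + r) / (2 * (1 - r)).
Definition Gc (r X k : R) := (Ap r X k + Hc r X) * (1 + r) / (1 - r).
Definition Dc (r X k : R) := - ((1 + r) * (Ap r X k + Cp r X) + Ec r X + r * (Gc r X k + Hc r X)) / (1 - r).
Definition Fc (r X k : R) := - (1 - r) / NN r X * ((k + 1) * Dc r X k + Ec r X * k * (k + 1) / 2 + Gc r X k * Sj1 r X k + Hc r X * Sj2 r X k).

Ltac UC := unfold Fc, Dc, Gc, Hc, Ec, Ap, Sj1, Sj2, Cp, Bp, cpiK, cpi0, NN.

Definition psiR (lam mu : R) (K : nat) (j : nat) : R :=
  if Nat.leb j K then
    Cp (lam / mu) ((lam / mu) ^ K) + (Ap (lam / mu) ((lam / mu) ^ K) (INR K) + Bp (lam / mu) ((lam / mu) ^ K) * INR j) * (lam / mu) ^ j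
  else 0.

Definition chiR (lam mu : R) (K : nat) (j : nat) : R :=
  if Nat.leb j K then
    Dc (lam / mu) ((lam / mu) ^ K) (INR K) + Ec (lam / mu) ((lam / mu) ^ K) * INR j
    + (Fc (lam / mu) ((lam / mu) ^ K) (INR K) + Gc (lam / mu) ((lam / mu) ^ K) (INR K) * INR j
       + Hc (lam / mu) ((lam / mu) ^ K) * INR j ^ 2) * (lam / mu) ^ j
  else 0.

Lemma aa_sum (q : R) (K : nat) (pi : nat -> R) : (1 <= K)%nat -> sum_f_R0 pi K = 1 ->
  sum_f_R0 (fun j => aa q K pi j - cc q pi * pi j) K = 0.
Proof.
  intros HK Hs. rewrite minus_sum, sum_scal, Hs. unfold aa, cc.
  destruct K as [|K']; [lia|].
  rewrite sum_last0.
  2:{ rewrite (proj2 (Nat.leb_gt _ _)) by lia. reflexivity. }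
  rewrite (sum_eq _ (fun j => q * pi (S j))).
  2:{ intros i Hi. rewrite (proj2 (Nat.leb_le _ _)) by lia. reflexivity. }
  rewrite sum_scal. rewrite sum_shift in Hs. replace (sum_f_R0 (fun j => pi (S j)) K') with (1 - pi 0%nat) by lra.
  ring.
Qed.

Lemma pw1 r K : r ^ (K + 1) = r * r ^ K.
Proof. rewrite Nat.add_1_r. reflexivity. Qed.
Lemma pw2 r K : r ^ (2 * K + 1) = r * (r ^ K) ^ 2.
Proof. rewrite Nat.add_1_r. simpl pow at 1. rewrite <- pow_mult, Nat.mul_comm. reflexivity. Qed.
Lemma pw3 r K : r ^ (2 * K) = (r ^ K) ^ 2.
Proof. rewrite <- pow_mult, Nat.mul_comm. reflexivity. Qed.
Lemma pw4 r K : r ^ (2 * (K + 1)) = r ^ 2 * (r ^ K) ^ 2.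
Proof. replace (2 * (K + 1))%nat with (2 + K * 2)%nat by lia. rewrite pow_add, pow_mult. reflexivity. Qed.
Lemma pw5 r K : r ^ (2 * (K + 2)) = r ^ 4 * (r ^ K) ^ 2.
Proof. replace (2 * (K + 2))%nat with (4 + K * 2)%nat by lia. rewrite pow_add, pow_mult. reflexivity. Qed.

Section Rne1.
Variables (lam mu : R) (K : nat).
Hypothesis Hlam : 0 < lam.
Hypothesis Hmu : 0 < mu.
Hypothesis HK : (1 <= K)%nat.
Hypothesis Hr : lam / mu <> 1.

Lemma r_pos : 0 < lam / mu.
Proof. apply Rdiv_lt_0_compat; lra. Qed.

Lemma r1_ne : 1 - lam / mu <> 0.
Proof. intro. apply Hr. lra. Qed.

Lemma rX_ne : 1 - lam / mu * (lam / mu) ^ K <> 0.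
Proof.
  intro H. apply (pow_neq1 K HK (lam / mu) (S K) r_pos Hr ltac:(lia)). simpl. lra.
Qed.

Lemma pp_r : pp lam mu = (lam / mu) / (1 + lam / mu).
Proof. unfold pp. field. split; lra. Qed.

Lemma qq_r : qq lam mu = 1 / (1 + lam / mu).
Proof. unfold qq. field. split; lra. Qed.

Lemma pi_val j : (j <= K)%nat ->
  pi_stat lam mu K j = (1 - lam / mu) / (1 - lam / mu * (lam / mu) ^ K) * (lam / mu) ^ j.
Proof.
  intro Hj. unfold pi_stat. cbv zeta. rewrite (proj2 (Nat.leb_le j K)) by lia.
  destruct (Req_dec_T (lam / mu) 1) as [E|E]; [contradiction|].
  rewrite Nat.add_1_r. reflexivity.
Qed.

Ltac prep := rewrite ?pp_r, ?qq_r;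
  pose proof r_pos; pose proof r1_ne; pose proof rX_ne;
  set (r := lam / mu) in *; set (X := r ^ K) in *; set (k := INR K) in *.

Lemma psi_eqR : forall j, psiR lam mu K j - Fw (pp lam mu) (qq lam mu) K (psiR lam mu K) j =
  aa (qq lam mu) K (pi_stat lam mu K) j - cc (qq lam mu) (pi_stat lam mu K) * pi_stat lam mu K j.
Proof.
  apply row_reduce; auto.
  - apply pq_sum; auto.
  - intros j Hj. unfold psiR. rewrite (proj2 (Nat.leb_gt j K)) by lia. reflexivity.
  - intros j Hj. unfold aa. rewrite (proj2 (Nat.leb_gt (S j) K)) by lia. rewrite pi_gt by auto. ring.
  - rewrite Fw_0 by auto. unfold aa, cc, psiR.
    rewrite (proj2 (Nat.leb_le 0 K)), (proj2 (Nat.leb_le 1 K)) by lia.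
    rewrite !pi_val by lia. prep. simpl pow. simpl INR. UC. field. lra.
  - intros j Hj. rewrite Fw_int by auto. unfold aa, cc, psiR.
    rewrite (proj2 (Nat.leb_le j K)), (proj2 (Nat.leb_le (S j) K)), (proj2 (Nat.leb_le (S (S j)) K)) by lia.
    rewrite !pi_val by lia. rewrite !S_INR. prep. simpl pow. UC. field. lra.
  - apply aa_sum; auto. apply pi_sum; auto.
Qed.

Lemma psi_sumR : sum_f_R0 (psiR lam mu K) K = 0.
Proof.
  rewrite (sum_eq _ (fun j => Cp (lam / mu) ((lam / mu) ^ K)
      + Ap (lam / mu) ((lam / mu) ^ K) (INR K) * (lam / mu) ^ j
      + Bp (lam / mu) ((lam / mu) ^ K) * (INR j * (lam / mu) ^ j))).
  2:{ intros j Hj. unfold psiR. rewrite (proj2 (Nat.leb_le j K)) by lia. ring. }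
  rewrite !plus_sum, !sum_scal, sum_cte, tech3, sum_jr by exact Hr.
  rewrite S_INR. simpl pow. prep. UC. field. lra.
Qed.

Lemma chi_eqR : forall j, chiR lam mu K j - Fw (pp lam mu) (qq lam mu) K (chiR lam mu K) j = psiR lam mu K j.
Proof.
  apply row_reduce; auto.
  - apply pq_sum; auto.
  - intros j Hj. unfold chiR. rewrite (proj2 (Nat.leb_gt j K)) by lia. reflexivity.
  - intros j Hj. unfold psiR. rewrite (proj2 (Nat.leb_gt j K)) by lia. reflexivity.
  - rewrite Fw_0 by auto. unfold chiR, psiR.
    rewrite (proj2 (Nat.leb_le 0 K)), (proj2 (Nat.leb_le 1 K)) by lia.
    prep. simpl pow. simpl INR. UC. field. lra.
  - intros j Hj. rewrite Fw_int by auto. unfold chiR, psiR.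
    rewrite (proj2 (Nat.leb_le j K)), (proj2 (Nat.leb_le (S j) K)), (proj2 (Nat.leb_le (S (S j)) K)) by lia.
    rewrite !S_INR. prep. simpl pow. UC. field. lra.
  - apply psi_sumR.
Qed.

Lemma chi_sumR : sum_f_R0 (chiR lam mu K) K = 0.
Proof.
  rewrite (sum_eq _ (fun j => Dc (lam / mu) ((lam / mu) ^ K) (INR K)
      + Ec (lam / mu) ((lam / mu) ^ K) * INR j
      + Fc (lam / mu) ((lam / mu) ^ K) (INR K) * (lam / mu) ^ j
      + Gc (lam / mu) ((lam / mu) ^ K) (INR K) * (INR j * (lam / mu) ^ j)
      + Hc (lam / mu) ((lam / mu) ^ K) * (INR j ^ 2 * (lam / mu) ^ j))).
  2:{ intros j Hj. unfold chiR. rewrite (proj2 (Nat.leb_le j K)) by lia. ring. }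
  rewrite !plus_sum, !sum_scal, sum_cte, sum_j1, tech3, sum_jr, sum_j2r by exact Hr.
  rewrite S_INR. simpl pow. prep. UC. field. lra.
Qed.



Lemma vbarR : vbar lam mu K = (lam + mu) *
  (cc (qq lam mu) (pi_stat lam mu K) - 2 * qq lam mu * psiR lam mu K 0%nat).
Proof.
  unfold vbar. cbv zeta. destruct (Req_dec_T (lam / mu) 1) as [E|E]; [contradiction|].
  unfold cc, psiR. rewrite (proj2 (Nat.leb_le 0 K)) by lia. rewrite pi_val by lia.
  rewrite pw1, pw2. simpl pow. simpl INR. prep.
  assert (Hl : lam = mu * r) by (unfold r; field; lra).
  rewrite Hl. UC. field. lra.
Qed.

Lemma bbarR : bbar_e lam mu K = 2 * qq lam mu * chiR lam mu K 0%nat.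
Proof.
  unfold bbar_e. cbv zeta. destruct (Req_dec_T (lam / mu) 1) as [E|E]; [contradiction|].
  unfold N_K, chiR. rewrite (proj2 (Nat.leb_le 0 K)) by lia.
  rewrite pw1, pw3, pw4, pw5. simpl INR. rewrite pow_O.
  prep. UC. field. lra.
Qed.

End Rne1.

Definition uo (k : R) := 1 / (k + 1).
Definition Bo (k : R) := - uo k ^ 2 / 2.
Definition Ao (k : R) := - uo k ^ 2 / 2.
Definition Co (k : R) := - (Ao k * (k * (k + 1) / 2) + Bo k * (k * (k + 1) * (2 * k + 1) / 6)) / (k + 1).
Definition Ho (k : R) := - Bo k / 6.
Definition Go (k : R) := - Ao k / 3.
Definition Fo (k : R) := - Co k - Ho k.
Definition Eo (k : R) := - 2 * Co k - Fo k - Go k - Ho k.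
Definition Do (k : R) := - (Eo k * (k * (k + 1) / 2) + Fo k * (k * (k + 1) * (2 * k + 1) / 6)
   + Go k * ((k * (k + 1) / 2) ^ 2) + Ho k * (k * (k + 1) * (2 * k + 1) * (3 * k ^ 2 + 3 * k - 1) / 30)) / (k + 1).
Ltac UO := unfold Do, Eo, Fo, Go, Ho, Co, Ao, Bo, uo.

Definition psiO (K : nat) (j : nat) : R :=
  if Nat.leb j K then Co (INR K) + Ao (INR K) * INR j + Bo (INR K) * INR j ^ 2 else 0.
Definition chiO (K : nat) (j : nat) : R :=
  if Nat.leb j K then Do (INR K) + Eo (INR K) * INR j + Fo (INR K) * INR j ^ 2
     + Go (INR K) * INR j ^ 3 + Ho (INR K) * INR j ^ 4 else 0.

Section Req1.
Variables (lam mu : R) (K : nat).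
Hypothesis Hlam : 0 < lam.
Hypothesis Hmu : 0 < mu.
Hypothesis HK : (1 <= K)%nat.
Hypothesis Hr : lam / mu = 1.

Lemma lam_mu : lam = mu.
Proof. apply (Rmult_eq_reg_r (/ mu)); [|apply Rinv_neq_0_compat; lra]. rewrite Rinv_r by lra. exact Hr. Qed.

Lemma pp_o : pp lam mu = 1 / 2.
Proof. unfold pp. rewrite lam_mu. field. lra. Qed.
Lemma qq_o : qq lam mu = 1 / 2.
Proof. unfold qq. rewrite lam_mu. field. lra. Qed.

Lemma pi_o j : (j <= K)%nat -> pi_stat lam mu K j = 1 / (INR K + 1).
Proof.
  intro Hj. unfold pi_stat. cbv zeta. rewrite (proj2 (Nat.leb_le j K)) by lia.
  destruct (Req_dec_T (lam / mu) 1) as [E|E]; [|contradiction].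
  rewrite plus_INR. simpl INR. field. pose proof (pos_INR K). lra.
Qed.

Ltac prepo := rewrite ?pp_o, ?qq_o; assert (0 <= INR K) by apply pos_INR; set (k := INR K) in *.

Lemma psi_eqO : forall j, psiO K j - Fw (pp lam mu) (qq lam mu) K (psiO K) j =
  aa (qq lam mu) K (pi_stat lam mu K) j - cc (qq lam mu) (pi_stat lam mu K) * pi_stat lam mu K j.
Proof.
  apply row_reduce; auto.
  - apply pq_sum; auto.
  - intros j Hj. unfold psiO. rewrite (proj2 (Nat.leb_gt j K)) by lia. reflexivity.
  - intros j Hj. unfold aa. rewrite (proj2 (Nat.leb_gt (S j) K)) by lia. rewrite pi_gt by auto. ring.
  - rewrite Fw_0 by auto. unfold aa, cc, psiO.
    rewrite (proj2 (Nat.leb_le 0 K)), (proj2 (Nat.leb_le 1 K)) by lia.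
    rewrite !pi_o by lia. simpl INR. prepo. UO. field. lra.
  - intros j Hj. rewrite Fw_int by auto. unfold aa, cc, psiO.
    rewrite (proj2 (Nat.leb_le j K)), (proj2 (Nat.leb_le (S j) K)), (proj2 (Nat.leb_le (S (S j)) K)) by lia.
    rewrite !pi_o by lia. rewrite !S_INR. prepo. UO. field. lra.
  - apply aa_sum; auto. apply pi_sum; auto.
Qed.

Lemma psi_sumO : sum_f_R0 (psiO K) K = 0.
Proof.
  rewrite (sum_eq _ (fun j => Co (INR K) + Ao (INR K) * INR j + Bo (INR K) * INR j ^ 2)).
  2:{ intros j Hj. unfold psiO. rewrite (proj2 (Nat.leb_le j K)) by lia. ring. }
  rewrite !plus_sum, !sum_scal, sum_cte, sum_j1, sum_j2.
  rewrite S_INR. prepo. UO. field. lra.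
Qed.

Lemma chi_eqO : forall j, chiO K j - Fw (pp lam mu) (qq lam mu) K (chiO K) j = psiO K j.
Proof.
  apply row_reduce; auto.
  - apply pq_sum; auto.
  - intros j Hj. unfold chiO. rewrite (proj2 (Nat.leb_gt j K)) by lia. reflexivity.
  - intros j Hj. unfold psiO. rewrite (proj2 (Nat.leb_gt j K)) by lia. reflexivity.
  - rewrite Fw_0 by auto. unfold chiO, psiO.
    rewrite (proj2 (Nat.leb_le 0 K)), (proj2 (Nat.leb_le 1 K)) by lia.
    simpl INR. prepo. UO. field. lra.
  - intros j Hj. rewrite Fw_int by auto. unfold chiO, psiO.
    rewrite (proj2 (Nat.leb_le j K)), (proj2 (Nat.leb_le (S j) K)), (proj2 (Nat.leb_le (S (S j)) K)) by lia.
    rewrite !S_INR. prepo. UO. field. lra.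
  - apply psi_sumO.
Qed.

Lemma chi_sumO : sum_f_R0 (chiO K) K = 0.
Proof.
  rewrite (sum_eq _ (fun j => Do (INR K) + Eo (INR K) * INR j + Fo (INR K) * INR j ^ 2
     + Go (INR K) * INR j ^ 3 + Ho (INR K) * INR j ^ 4)).
  2:{ intros j Hj. unfold chiO. rewrite (proj2 (Nat.leb_le j K)) by lia. ring. }
  rewrite !plus_sum, !sum_scal, sum_cte, sum_j1, sum_j2, sum_j3, sum_j4.
  rewrite S_INR. prepo. UO. field. lra.
Qed.

Lemma vbarO : vbar lam mu K = (lam + mu) *
  (cc (qq lam mu) (pi_stat lam mu K) - 2 * qq lam mu * psiO K 0%nat).
Proof.
  unfold vbar. cbv zeta. destruct (Req_dec_T (lam / mu) 1) as [E|E]; [|contradiction].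
  unfold cc, psiO. rewrite (proj2 (Nat.leb_le 0 K)) by lia. rewrite pi_o by lia.
  simpl INR. prepo. rewrite <- lam_mu. UO. field. lra.
Qed.

Lemma bbarO : bbar_e lam mu K = 2 * qq lam mu * chiO K 0%nat.
Proof.
  unfold bbar_e. cbv zeta. destruct (Req_dec_T (lam / mu) 1) as [E|E]; [|contradiction].
  unfold chiO. rewrite (proj2 (Nat.leb_le 0 K)) by lia.
  simpl INR. prepo. UO. field. lra.
Qed.

End Req1.

Definition keyP (lam mu : R) (K : nat) (psi chi : nat -> R) :=
  (forall j, psi j - Fw (pp lam mu) (qq lam mu) K psi j =
     aa (qq lam mu) K (pi_stat lam mu K) j - cc (qq lam mu) (pi_stat lam mu K) * pi_stat lam mu K j) /\
  sum_f_R0 psi K = 0 /\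
  (forall j, chi j - Fw (pp lam mu) (qq lam mu) K chi j = psi j) /\
  sum_f_R0 chi K = 0 /\
  vbar lam mu K = (lam + mu) * (cc (qq lam mu) (pi_stat lam mu K) - 2 * qq lam mu * psi 0%nat) /\
  bbar_e lam mu K = 2 * qq lam mu * chi 0%nat.

Lemma key lam mu K : 0 < lam -> 0 < mu -> (1 <= K)%nat ->
  exists psi chi, keyP lam mu K psi chi.
Proof.
  intros Hl Hm HK. destruct (Req_dec_T (lam / mu) 1) as [E|E].
  - exists (psiO K), (chiO K). repeat split.
    + apply psi_eqO; auto. + apply psi_sumO; auto. + apply chi_eqO; auto. + apply chi_sumO; auto.
    + apply vbarO; auto. + apply bbarO; auto.
  - exists (psiR lam mu K), (chiR lam mu K). repeat split.
    + apply psi_eqR; auto. + apply psi_sumR; auto. + apply chi_eqR; auto. + apply chi_sumR; auto.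
    + apply vbarR; auto. + apply bbarR; auto.
Qed.

Theorem proposition1 (lam mu : R) (K : nat) :
  0 < lam -> 0 < mu -> (1 <= K)%nat ->
  forall eps : R, 0 < eps ->
    exists T : R, forall t : R, T <= t ->
      Rabs (VarD lam mu K t - (vbar lam mu K * t + bbar_e lam mu K)) < eps.
Proof.
  intros Hl Hm HK eps Heps.
  destruct (key lam mu K Hl Hm HK) as (psi & chi & Hpsi & Hpsis & Hchi & Hchis & Hv & Hb).
  set (p := pp lam mu) in *. set (q := qq lam mu) in *.
  set (pi := pi_stat lam mu K) in *.
  assert (Hp : 0 <= p) by (unfold p, pp; left; apply Rdiv_lt_0_compat; lra).
  assert (Hq : 0 < q) by (unfold q, qq; apply Rdiv_lt_0_compat; lra).
  assert (pq1 : p + q = 1) by (apply pq_sum; auto).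
  assert (Hq1 : q <= 1) by lra.
  assert (Hst : forall j, Fw p q K pi j = pi j) by (intro; apply pi_stationary; auto).
  assert (Hps : sum_f_R0 pi K = 1) by (apply pi_sum; auto).
  set (c := cc q pi) in *.
  set (V := c - 2 * q * psi 0%nat).
  set (beta := 2 * q * chi 0%nat).
  set (e := fun m => Fwn p q K m chi 0%nat).
  assert (U1 : forall m, umoment lam mu K m 1 = INR m * c).
  { intro m. change (umoment lam mu K m 1) with (sum_f_R0 (V1 lam mu K m) K).
    apply (S1_formula p q K pq1 HK pi Hst Hps psi Hpsi Hpsis).
    - apply V1_0. - intros; apply V1_S; auto. }
  assert (U2 : forall m, umoment lam mu K m 2 =
     c ^ 2 * (INR m * (INR m - 1)) + V * INR m + beta - 2 * q * e m).
  { intro m. change (umoment lam mu K m 2) with (sum_f_R0 (V2 lam mu K m) K).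
    rewrite (S2_formula p q K pq1 HK pi Hst Hps psi chi Hpsi Hpsis Hchi Hchis (V1 lam mu K) (V2 lam mu K)).
    - unfold V, beta, e, c. cbv beta. ring.
    - apply V1_0. - intros; apply V1_S; auto. - apply V2_0. - intros; apply V2_S; auto. }
  set (B := sum_f_R0 (fun j => Rabs (chi j)) K).
  assert (HeB : forall m, Rabs (e m) <= B) by (intro m; apply e_bound; auto; lra).
  assert (Hec : forall eps, 0 < eps -> exists N, forall m, (N <= m)%nat -> Rabs (e m) <= eps)
    by (intros; apply e_conv; auto; lra).
  destruct (tail_small e B HeB Hec (eps / 4) ltac:(lra)) as [X HX].
  exists (Rmax X 0 / (lam + mu)). intros t Ht.
  set (x := (lam + mu) * t).
  assert (Hx' : Rmax X 0 <= x).
  { unfold x. apply Rmult_le_reg_r with (/ (lam + mu)); [apply Rinv_0_lt_compat; lra|].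
    replace ((lam + mu) * t * / (lam + mu)) with t by (field; lra). exact Ht. }
  assert (Hx : X <= x) by (eapply Rle_trans; [apply Rmax_l|exact Hx']).
  assert (Hx0 : forall m, 0 <= pw x m).
  { intro m. apply pw_pos. eapply Rle_trans; [apply Rmax_r|exact Hx']. }
  destruct (series_bnd (pw x) e B 1 Hx0 HeB (pw_sum_cv x)) as [L HL].
  assert (E1 : ED_moment lam mu K t 1 = c * x).
  { unfold ED_moment. apply series_eq.
    apply (cv_ext (fun N => c * sum_f_R0 (fun m => pw x m * INR m) N)).
    - intro n. rewrite <- sum_scal. apply sum_eq. intros i _. rewrite U1. unfold poisson_w, pw. fold x. ring.
    - apply CV_mult; [apply cv_const|apply pw_m_cv]. }
  assert (E2 : ED_moment lam mu K t 2 = c ^ 2 * x ^ 2 + V * x + beta - 2 * q * L).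
  { unfold ED_moment. apply series_eq.
    apply (cv_ext (fun N => c ^ 2 * sum_f_R0 (fun m => pw x m * (INR m * (INR m - 1))) N
                           + V * sum_f_R0 (fun m => pw x m * INR m) N
                           + beta * sum_f_R0 (pw x) N
                           - 2 * q * sum_f_R0 (fun m => pw x m * e m) N)).
    - intro n. rewrite <- !sum_scal, <- !plus_sum, <- minus_sum. apply sum_eq. intros i _.
      rewrite U2. unfold poisson_w, pw. fold x. ring.
    - apply CV_minus; [|apply CV_mult; [apply cv_const|exact HL]].
      apply CV_plus; [apply CV_plus|].
      + apply CV_mult; [apply cv_const|apply pw_mm_cv].
      + apply CV_mult; [apply cv_const|apply pw_m_cv].
      + assert (H := CV_mult _ _ _ _ (cv_const beta) (pw_sum_cv x)). rewrite Rmult_1_r in H. exact H. }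
  unfold VarD. rewrite E1, E2, Hv, Hb. fold c. fold V.
  replace (c ^ 2 * x ^ 2 + V * x + beta - 2 * q * L - (c * x) ^ 2 -
     ((lam + mu) * V * t + 2 * q * chi 0%nat)) with (- (2 * q * L)) by (unfold x, beta; ring).
  rewrite Rabs_Ropp, Rabs_mult, Rabs_right by lra.
  specialize (HX x L Hx HL).
  assert (2 * q * Rabs L <= 2 * 1 * (eps / 4)).
  { apply Rmult_le_compat; try lra. apply Rabs_pos. }
  lra.
Qed.
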